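(* There is an absolute constant $C>0$ such that for all integers $k\geq2$, \[ \lceil C\cdot 1073^{k/6}\rceil\nrightarrow(3)^2_k. \]
   Context: For $m\in\mathbb N$ write $[m]=\{0,\dots,m-1\}$. For $n\geq 3$, $k\geq 2$, the relation $n\to(3)_k^2$ means that every colouring of the edges of the complete graph on $[n]$ with $k$ colours contains a monochromatic triangle; $n\nrightarrow(3)_k^2$ is its negation. *)

(* Defs.v *)
From Stdlib Require Import Reals Lra Lia ZArith.
Open Scope R_scope.

(* An edge colouring of the complete graph on [n] = {0,...,n-1} with k colours:
   the edge {i,j} (i < j) gets colour c i j, which must be < k. *)
Definition is_colouring (n k : nat) (c : nat -> nat -> nat) : Prop :=
  forall i j : nat, (i < j < n)%nat -> (c i j < k)%nat.

Definition has_mono_triangle (n : nat) (c : nat -> nat -> nat) : Prop :=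
  exists i j l : nat, (i < j < l)%nat /\ (l < n)%nat /\
    c i j = c i l /\ c i j = c j l.

Definition arrows3 (n k : nat) : Prop :=
  forall c, is_colouring n k c -> has_mono_triangle n c.

(* Main.v *)
Require Import Defs.
From Stdlib Require Import Reals ZArith Lia Lra List Bool Arith.
Import ListNotations.
Open Scope R_scope.

Module Aux.
Local Open Scope nat_scope.

Definition sf (N k : nat) (f : nat -> nat) : Prop :=
  (forall x, 1 <= x <= N -> f x < k) /\
  (forall x y, 1 <= x -> 1 <= y -> x + y <= N ->
     f x = f y -> f y = f (x+y) -> False).

Definition LL : nat := 33.
Definition WW : nat := 26.
Definition labs : list nat :=
  [0;0;1;3;3;3;1;2;2;1;0;0;0;1;0;0;0;1;2;2;1;3;3;3;1;0;0;1;2;3;3;2;1].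
Definition lab (r : nat) : nat := nth r labs 0.

Definition tcheck : bool :=
  forallb (fun r => (lab r <=? 3) && (implb (WW <? r) (negb (lab r =? 0)))) (seq 0 LL) &&
  forallb (fun r1 => forallb (fun r2 => forallb (fun r3 =>
     if (lab r1 =? lab r2) && (lab r2 =? lab r3) then
       if lab r1 =? 0 then
         negb (r1 + r2 =? r3 + WW + LL) && negb (r1 + r2 + LL =? r3 + WW)
       else
         negb (r1 + r2 =? r3 + WW + LL) && negb (r1 + r2 + LL =? r3 + WW)
         && negb (r1 + r2 =? r3 + WW)
     else true) (seq 0 LL)) (seq 0 LL)) (seq 0 LL).

Lemma tcheck_ok : tcheck = true.
Proof. vm_compute. reflexivity. Qed.

Lemma tprops :
  (forall r, r < LL -> lab r <= 3 /\ (WW < r -> lab r <> 0)) /\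
  (forall r1 r2 r3, r1 < LL -> r2 < LL -> r3 < LL -> lab r1 = lab r2 -> lab r2 = lab r3 ->
     r1 + r2 <> r3 + WW + LL /\ r1 + r2 + LL <> r3 + WW /\
     (lab r1 <> 0 -> r1 + r2 <> r3 + WW)).
Proof.
  pose proof tcheck_ok as H. unfold tcheck in H.
  apply andb_true_iff in H as [H1 H2]. rewrite forallb_forall in H1, H2. split.
  - intros r Hr. assert (Hin : In r (seq 0 LL)) by (apply in_seq; lia).
    specialize (H1 r Hin). apply andb_true_iff in H1 as [A B].
    split; [apply Nat.leb_le; exact A|].
    intros Hw. apply Nat.ltb_lt in Hw. rewrite Hw in B. simpl in B.
    apply negb_true_iff, Nat.eqb_neq in B. exact B.
  - intros r1 r2 r3 h1 h2 h3 e1 e2.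
    assert (i1 : In r1 (seq 0 LL)) by (apply in_seq; lia).
    assert (i2 : In r2 (seq 0 LL)) by (apply in_seq; lia).
    assert (i3 : In r3 (seq 0 LL)) by (apply in_seq; lia).
    specialize (H2 r1 i1). rewrite forallb_forall in H2. specialize (H2 r2 i2).
    rewrite forallb_forall in H2. specialize (H2 r3 i3).
    rewrite e1, e2, !Nat.eqb_refl in H2. simpl in H2.
    rewrite <- e2, <- e1 in *.
    destruct (lab r1 =? 0) eqn:E0.
    + apply Nat.eqb_eq in E0.
      apply andb_true_iff in H2 as [A B]. apply negb_true_iff, Nat.eqb_neq in A.
      apply negb_true_iff, Nat.eqb_neq in B. split; [exact A|split; [exact B|]].
      intros C; exfalso; apply C; exact E0.
    + apply andb_true_iff in H2 as [H2 C]. apply andb_true_iff in H2 as [A B].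
      apply negb_true_iff, Nat.eqb_neq in A. apply negb_true_iff, Nat.eqb_neq in B.
      apply negb_true_iff, Nat.eqb_neq in C. split; [exact A|split; [exact B|]]. intros _. exact C.
Qed.

Definition TM (a : nat) (A : nat -> nat) (x : nat) : nat :=
  if lab ((x + WW) mod LL) =? 0 then A ((x + WW) / LL)
  else a + lab ((x + WW) mod LL) - 1.

Lemma three_cases (L a b c d : nat) : 0 < L -> c < 2*L -> d < 2*L ->
  L*a + c = L*b + d -> (a = b /\ c = d) \/ (a + 1 = b /\ c = d + L) \/ (a = b + 1 /\ c + L = d).
Proof.
  intros HL Hc Hd E.
  destruct (Nat.lt_trichotomy a b) as [Hl|[He|Hl]].
  - assert (Hb : b = a + 1 \/ a + 2 <= b) by lia. destruct Hb as [Hb|Hb].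
    + subst b. right; left. split; [reflexivity|nia].
    + assert (L * (a+2) <= L * b) by (apply Nat.mul_le_mono_l; lia). nia.
  - subst b. left. split; [reflexivity|lia].
  - assert (Ha : a = b + 1 \/ b + 2 <= a) by lia. destruct Ha as [Ha|Ha].
    + subst a. right; right. split; [reflexivity|nia].
    + assert (L * (b+2) <= L * a) by (apply Nat.mul_le_mono_l; lia). nia.
Qed.

Lemma TM_sf u a A : sf u a A -> sf ((u+1)*LL - WW - 1) (a+3) (TM a A).
Proof.
  intros [HA1 HA2].
  destruct tprops as [P1 P2].
  assert (Hcol : forall x, 1 <= x <= (u+1)*LL - WW - 1 -> exists q r,
     x + WW = LL*q + r /\ r < LL /\
     ((lab r <> 0 /\ TM a A x = a + lab r - 1 /\ 1 <= lab r <= 3) \/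
      (lab r = 0 /\ 1 <= q <= u /\ TM a A x = A q /\ A q < a))).
  { intros x Hx. exists ((x + WW)/LL), ((x + WW) mod LL).
    assert (E : x + WW = LL * ((x + WW)/LL) + (x + WW) mod LL) by (apply Nat.div_mod_eq).
    assert (Hr : (x + WW) mod LL < LL) by (apply Nat.mod_upper_bound; unfold LL; lia).
    split; [exact E|split; [exact Hr|]].
    set (q := (x + WW)/LL) in *. set (r := (x + WW) mod LL) in *.
    unfold TM. fold q r.
    destruct (P1 r Hr) as [Hl Hw].
    destruct (Nat.eqb_spec (lab r) 0) as [H0|H0].
    - right. assert (r <= WW) by (destruct (Nat.le_gt_cases r WW); [assumption|exfalso; apply (Hw H); exact H0]).
      assert (1 <= q).
      { destruct q as [|q']; [unfold LL, WW in *; lia|lia]. }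
      assert (q <= u).
      { destruct (Nat.le_gt_cases q u) as [|Hq]; [assumption|].
        assert (LL * (u+1) <= LL*q) by (apply Nat.mul_le_mono_l; lia). unfold LL, WW in *. nia. }
      split; [exact H0|split; [lia|split; [reflexivity|]]]. apply HA1. lia.
    - left. split; [exact H0|split; [reflexivity|lia]]. }
  split.
  - intros x Hx. destruct (Hcol x Hx) as (q & r & _ & _ & [(_ & E & H)|(_ & _ & E & H)]); lia.
  - intros x y Hx Hy Hxy E1 E2.
    destruct (Hcol x ltac:(lia)) as (qx & rx & Ex & Rx & Cx).
    destruct (Hcol y ltac:(lia)) as (qy & ry & Ey & Ry & Cy).
    destruct (Hcol (x+y) ltac:(lia)) as (qz & rz & Ez & Rz & Cz).
    assert (Eq : LL*(qx+qy) + (rx+ry) = LL*qz + (rz + WW)) by (unfold LL, WW in *; lia).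
    assert (Hc3 := three_cases LL (qx+qy) qz (rx+ry) (rz+WW) ltac:(unfold LL; lia)
                     ltac:(unfold LL in *; lia) ltac:(unfold LL, WW in *; lia) Eq).
    destruct Cx as [(vx & fx & bx)|(vx & qxr & fx & ax)];
    destruct Cy as [(vy & fy & by_)|(vy & qyr & fy & ay)];
    destruct Cz as [(vz & fz & bz)|(vz & qzr & fz & az)];
    rewrite ?fx, ?fy, ?fz in *; try lia.
    +
      assert (l1 : lab rx = lab ry) by lia. assert (l2 : lab ry = lab rz) by lia.
      destruct (P2 rx ry rz Rx Ry Rz l1 l2) as (N1 & N2 & N3).
      destruct Hc3 as [(_ & H)|[(_ & H)|(_ & H)]].
      * apply (N3 vx). lia.
      * apply N1. lia.
      * apply N2. lia.
    +
      assert (l1 : lab rx = lab ry) by lia. assert (l2 : lab ry = lab rz) by lia.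
      destruct (P2 rx ry rz Rx Ry Rz l1 l2) as (N1 & N2 & N3).
      destruct Hc3 as [(Hq & H)|[(_ & H)|(_ & H)]].
      * apply (HA2 qx qy); try lia. rewrite Hq. lia.
      * apply N1. lia.
      * apply N2. lia.
Qed.

Definition check_dummy := tt.

Lemma sf_not_arrows N k f : sf N k f -> ~ arrows3 (S N) k.
Proof.
  intros [H1 H2] Har.
  destruct (Har (fun i j => f (j - i))) as (i & j & l & Hij & Hl & E1 & E2).
  - intros i j Hij. apply H1. lia.
  - cbv beta in E1, E2. apply (H2 (j - i) (l - j)); try lia.
    all: try exact E2.
    all: replace (j - i + (l - j)) with (l - i) by lia; rewrite <- E2, E1; reflexivity.
Qed.

Lemma not_arrows_mono n m k : ~ arrows3 n k -> m <= n -> ~ arrows3 m k.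
Proof.
  intros Hn Hmn Hm. apply Hn. intros c Hc.
  destruct (Hm c) as (i & j & l & H1 & H2 & H3).
  - intros i j Hij. apply Hc. lia.
  - exists i, j, l. split; [exact H1|split; [lia|exact H3]].
Qed.

Lemma sf_mono_k N k k' f : sf N k f -> k <= k' -> sf N k' f.
Proof. intros [H1 H2] Hk. split; [intros x Hx; specialize (H1 x Hx); lia|exact H2]. Qed.

Fixpoint sz (j : nat) : nat := match j with 0 => 0 | S j => (sz j + 1) * LL - WW - 1 end.
Fixpoint G (j : nat) : nat -> nat :=
  match j with 0 => fun _ => 0 | S j => TM (3*j) (G j) end.

Lemma G_sf j : sf (sz j) (3*j) (G j).
Proof.
  induction j as [|j IH].
  - simpl. split; intros; lia.
  - cbn [sz G]. replace (3 * S j) with (3*j + 3) by lia.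
    apply TM_sf; assumption.
Qed.

Lemma sz_eq j : 32 * (sz j + 1) = 6 * 33 ^ j + 26.
Proof.
  induction j as [|j IH]; [reflexivity|]. rewrite Nat.pow_succ_r'. cbn [sz].
  unfold LL, WW. lia.
Qed.

Local Open Scope R_scope.
Lemma main_thm :
  exists C : R, 0 < C /\
    forall k : nat, (2 <= k)%nat ->
      ~ arrows3 (Z.to_nat (Zceil (C * Rpower 1073 (INR k / 6)))) k.
Proof.
  exists (/ (32 * 33))%R. split; [lra|].
  intros k Hk.
  set (j := (k / 3)%nat).
  assert (Hj1 : (3 * j <= k)%nat) by (apply Nat.Div0.mul_div_le).
  assert (Hj2 : (k < 3 * (j + 1))%nat).
  { pose proof (Nat.div_mod k 3 ltac:(lia)). pose proof (Nat.mod_upper_bound k 3 ltac:(lia)). fold j in H. lia. }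
  apply (not_arrows_mono (S (sz j))).
  - apply (sf_not_arrows _ _ (G j)). apply (sf_mono_k _ (3*j)%nat); [apply G_sf|exact Hj1].
  - assert (Hk0 : 0 <= INR k / 6) by (apply Rmult_le_pos; [apply pos_INR|lra]).
    assert (Hpow : (Rpower 1073 (INR k / 6) <= 33 ^ (j+1)%nat)%R).
    { apply Rle_trans with (Rpower 1089 (INR k / 6)).
      - apply Rle_Rpower_l; [exact Hk0|lra].
      - replace 1089%R with (Rpower 33 (INR 2)) by (rewrite Rpower_pow by lra; simpl; lra).
        rewrite Rpower_mult. rewrite <- Rpower_pow by lra.
        apply Rle_Rpower; [lra|].
        apply lt_INR in Hj2. rewrite mult_INR in Hj2.
        replace (INR 3) with 3%R in Hj2 by (simpl; lra).
        replace (INR 2) with 2%R by (simpl; lra). lra. }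
    assert (Hsz : (32 * INR (sz j + 1) = 6 * 33 ^ j + 26)%R).
    { replace 32%R with (INR 32) by (simpl; lra).
      rewrite <- mult_INR, sz_eq, plus_INR, mult_INR, pow_INR.
      replace (INR 6) with 6%R by (simpl; lra). replace (INR 26) with 26%R by (simpl; lra).
      replace (INR 33) with 33%R by (simpl; lra). reflexivity. }
    assert (Hb : (/ (32 * 33) * Rpower 1073 (INR k / 6) <= IZR (Z.of_nat (S (sz j))))%R).
    { rewrite <- INR_IZR_INZ. replace (S (sz j)) with (sz j + 1)%nat by lia.
      apply Rle_trans with (/ (32*33) * 33 ^ (j+1)%nat)%R.
      - apply Rmult_le_compat_l; [lra|exact Hpow].
      - rewrite pow_add. simpl (33 ^ 1)%R.
        assert (0 < 33 ^ j)%R by (apply pow_lt; lra).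
        replace (/ (32 * 33) * (33 ^ j * (33 * 1)))%R with (33 ^ j / 32)%R by (field).
        lra. }
    apply Zceil_le in Hb.
    rewrite (Zceil_eq (Z.of_nat (S (sz j))) (IZR (Z.of_nat (S (sz j))))) in Hb by lra.
    lia.
Qed.
End Aux.

Theorem theoremB1 :
  exists C : R, 0 < C /\
    forall k : nat, (2 <= k)%nat ->
      ~ arrows3 (Z.to_nat (Zceil (C * Rpower 1073 (INR k / 6)))) k.
Proof. exact Aux.main_thm. Qed.
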